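(* Let $c \geq 5$ be an integer, let $G$ be a graph, and let $v$ be a vertex of $G$ that has odd degree or has a neighbor of degree at most $2$. Let $Y=\{v\}\cup N_1(v)\cup N_2(v)$. If $G$ has no odd $c$-coloring, but $(G,Y)$ has a semi-odd $c$-coloring, then $2d(v) \geq 2n_1(v) + n_2(v) + n_e(v) + c$.
   Context: $N_d(v)$ is the set of neighbors of $v$ of degree exactly $d$, $n_d(v)=|N_d(v)|$, and $d(v)$ is the degree of $v$. A vertex is easy if it has degree at least $3$ and either has odd degree or has a neighbor of degree at most $2$; $n_e(v)$ is the number of easy neighbors of $v$. An odd color of a vertex (under a partial coloring) is a color appearing an odd number of times among its colored neighbors. An odd $c$-coloring of a graph is a proper coloring with at most $c$ colors in which every non-isolated vertex has an odd color. For $Y\subseteq V(G)$, a semi-odd $c$-coloring of $(G,Y)$ is a proper $c$-coloring $\phi$ of $G-Y$ such that every vertex of $G-Y$ not in $N_G(Y)$ has a color appearing an odd number of times (under $\phi$) in its neighborhood. *)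

(* Defs.v *)
(* A finite simple graph is a symmetric irreflexive relation
   e : rel T on a finite vertex type T. *)
From mathcomp Require Import all_boot all_order.
Set Implicit Arguments. Unset Strict Implicit. Unset Printing Implicit Defensive.

Section Graphs.
Variable T : finType.
Variable e : rel T.

Definition deg (v : T) : nat := #|[set u | e v u]|.

Definition Nd (d : nat) (v : T) : {set T} := [set u | e v u & deg u == d].
Definition nd (d : nat) (v : T) : nat := #|Nd d v|.

Definition easy (v : T) : bool :=
  (3 <= deg v) && (odd (deg v) || [exists w, e v w && (deg w <= 2)]).

Definition ne (v : T) : nat := #|[set u | e v u & easy u]|.

Definition odd_coloring (c : nat) (f : T -> 'I_c) : Prop :=
  (forall x y, e x y -> f x != f y) /\
  (forall x, (exists y, e x y) ->
     exists k : 'I_c, odd #|[set u | e x u & f u == k]|).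

Definition has_odd_coloring (c : nat) : Prop :=
  exists f : T -> 'I_c, odd_coloring f.

(* semi-odd c-coloring of (G, Y): f is a proper c-coloring of G - Y
   (values of f on Y are irrelevant), and every vertex x of G - Y that is not
   in N_G(Y) has a color appearing an odd number of times among its colored
   neighbors (neighbors in G - Y). *)
Definition semi_odd_coloring (c : nat) (Y : {set T}) (f : T -> 'I_c) : Prop :=
  (forall x y, x \notin Y -> y \notin Y -> e x y -> f x != f y) /\
  (forall x, x \notin Y -> (forall y, y \in Y -> ~~ e x y) ->
     exists k : 'I_c, odd #|[set u | e x u & (u \notin Y) && (f u == k)]|).

Definition has_semi_odd_coloring (c : nat) (Y : {set T}) : Prop :=
  exists f : T -> 'I_c, semi_odd_coloring Y f.

End Graphs.

(* Main.v *)
Require Import Defs.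
From mathcomp Require Import all_boot all_order.
From mathcomp Require Import zify.
From Stdlib Require Import Lia.
Set Implicit Arguments. Unset Strict Implicit. Unset Printing Implicit Defensive.

Section H.
Variable T : finType.
Variable e : rel T.

Lemma odd_deg_color c (g : T -> 'I_c) w : odd (deg e w) ->
  exists k : 'I_c, odd #|[set u | e w u & g u == k]|.
Proof.
move=> Hodd.
have E : deg e w = \sum_(k < c) #|[set u | e w u & g u == k]|.
  rewrite /deg -sum1_card (partition_big g (fun _ => true)) //=.
  apply: eq_bigr => k _; rewrite -sum1_card; apply: eq_bigl => u; by rewrite !inE.
suff: [exists k, odd #|[set u | e w u & g u == k]|] by move/existsP.
case: existsP => // H; exfalso.
move: Hodd; rewrite E -[odd _]negbK -dvdn2 => /negP; apply.
apply: dvdn_sum => k _; rewrite dvdn2; apply/negP => Ho; apply: H; by exists k.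
Qed.

Definition upd c (g : T -> 'I_c) s (x : 'I_c) := fun u => if u == s then x else g u.
Definition bad c (g : T -> 'I_c) s w (x : 'I_c) :=
  [forall k : 'I_c, ~~ odd #|[set u | e w u & upd g s x u == k]|].

Lemma bad_uniq c (g : T -> 'I_c) s w x1 x2 : e w s ->
  bad g s w x1 -> bad g s w x2 -> x1 = x2.
Proof.
move=> ews /forallP B1 /forallP B2; apply/eqP/negPn/negP => ne12.
have E : [set u | e w u & upd g s x1 u == x1] = s |: [set u | e w u & upd g s x2 u == x1].
  apply/setP => u; rewrite !inE /upd; case: (u =P s) => [->|_] /=.
    by rewrite ews eqxx.
  by [].
have := B1 x1; have := B2 x1; rewrite E cardsU1 !inE /upd eqxx eq_sym (negbTE ne12) andbF /=.
by move=> ->.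
Qed.

Lemma not_bad c (g : T -> 'I_c) s w x : ~~ bad g s w x ->
  exists k : 'I_c, odd #|[set u | e w u & upd g s x u == k]|.
Proof. by rewrite /bad negb_forall => /existsP [k]; rewrite negbK; exists k. Qed.

Lemma deg2_uniq w v a b : deg e w = 2 -> e w v -> e w a -> e w b -> a != v -> b != v -> a = b.
Proof.
move=> d2 wv wa wb av bv.
move: d2; rewrite /deg (cardsD1 v) inE wv add1n => /eqP; rewrite eqSS => /cards1P [x Hx].
have: a \in [set u | e w u] :\ v by rewrite !inE av wa.
have: b \in [set u | e w u] :\ v by rewrite !inE bv wb.
by rewrite Hx !inE => /eqP -> /eqP ->.
Qed.

Lemma card_split (P Q : pred T) :
  #|[set u | P u]| = #|[set u | P u && Q u]| + #|[set u | P u && ~~ Q u]|.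
Proof.
rewrite -(cardsID [set u | Q u] [set u | P u]); congr (_ + _); apply: eq_card => u; rewrite !inE; by [rewrite andbC | rewrite andbC].
Qed.


Definition Inv c (S : {set T}) (g : T -> 'I_c) :=
  (forall x y, x \notin S -> y \notin S -> e x y -> g x != g y) /\
  (forall w, (forall y, e w y -> y \notin S) -> (exists y, e w y) ->
     exists k : 'I_c, odd #|[set u | e w u & g u == k]|).

Lemma card_lt_pick c (F : {set 'I_c}) : #|F| < c -> exists x, x \notin F.
Proof.
move=> H; have: 0 < #|~: F| by rewrite (cardsCs F) card_ord in H; lia.
by move/card_gt0P => [x]; rewrite inE; exists x.
Qed.

Lemma greedy c : symmetric e -> irreflexive e -> 5 <= c ->
  forall n (S : {set T}) (g : T -> 'I_c), #|S| = n ->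
  (forall s, s \in S -> deg e s <= 2) -> Inv S g -> has_odd_coloring e c.
Proof.
move=> sym irr c5; elim=> [|n IH] S g cS degS [Hp Ho].
  move/eqP: cS; rewrite cards_eq0 => /eqP S0; exists g; split.
    by move=> x y; apply: Hp; rewrite S0 inE.
  by move=> x; apply: Ho => y _; rewrite S0 inE.
have: 0 < #|S| by rewrite cS.
case/card_gt0P => s sS.
set N := [set u | e s u].
pose h w := odflt (g w) [pick x | bad g s w x].
have cF : #|(g @: N) :|: (h @: N)| < c.
  rewrite cardsU; have := leq_imset_card g N; have := leq_imset_card h N.
  have := degS s sS; rewrite /deg -/N; lia.
case: (card_lt_pick cF) => x; rewrite inE negb_or => /andP [xg xh].
apply: (IH (S :\ s) (upd g s x)).
- by rewrite (cardsD1 s) sS in cS; case: cS.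
- by move=> t; rewrite inE => /andP [_ /degS].
split.
- move=> a b; rewrite !inE !negb_and !negbK /upd => Ha Hb eab.
  case: (a =P s) => [as_|nas]; case: (b =P s) => [bs|nbs].
  + by rewrite as_ bs irr in eab.
  + apply/eqP => E; move: xg; rewrite E; case/imsetP; exists b => //.
    by rewrite inE -as_.
  + apply/eqP => E; move: xg; rewrite -E; case/imsetP; exists a => //.
    by rewrite inE sym -bs.
  + apply: Hp => //.
    * by case/orP: Ha => // /eqP.
    * by case/orP: Hb => // /eqP.
- move=> w Hw nw.
  case ews: (e w s).
    apply: not_bad; apply/negP => Hb.
    have hw : h w = x.
      rewrite /h; case: (pickP (bad g s w)) => [y Hy|Hn]; last by rewrite Hn in Hb.
      by rewrite (bad_uniq ews Hb Hy).
    move/negP: xh; apply; apply/imsetP; exists w; first by rewrite inE sym.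
    by rewrite hw.
  have [k Hk] : exists k : 'I_c, odd #|[set u | e w u & g u == k]|.
    apply: Ho => // y ewy; have := Hw y ewy; rewrite !inE negb_and negbK.
    case/orP => // /eqP ys; by rewrite -ys ewy in ews.
  exists k; suff -> : [set u | e w u & upd g s x u == k] = [set u | e w u & g u == k] by [].
  apply/setP => u; rewrite !inE /upd.
  case: (u =P s) => // ->; by rewrite ews.
Qed.

End H.
Theorem mainTheorem8 (T : finType) (e : rel T) (c : nat) (v : T) :
  symmetric e -> irreflexive e ->
  5 <= c ->
  (odd (deg e v) || [exists w, e v w && (deg e w <= 2)]) ->
  let Y := v |: (Nd e 1 v :|: Nd e 2 v) in
  ~ has_odd_coloring e c ->
  has_semi_odd_coloring e c Y ->
  2 * deg e v >= 2 * nd e 1 v + nd e 2 v + ne e v + c.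
Proof.
move=> sym irr c5 hv Y noodd [f [fp fo]].
rewrite leqNgt; apply/negP => Hlt.
set D2 := [set u | deg e u <= 2].
have inY u : (u \in Y) = (u == v) || (e v u && (deg e u == 1)) || (e v u && (deg e u == 2)).
  by rewrite /Y /Nd !inE orbA.
clearbody Y.
have YD u : u \in Y -> u != v -> deg e u <= 2.
  rewrite inY => /orP [/orP [/eqP -> |/andP [_ /eqP ->]]|/andP [_ /eqP ->]] //; by rewrite eqxx.
have npos u : e v u -> 0 < deg e u.
  by move=> evu; apply/card_gt0P; exists v; rewrite inE sym.
have notYnb w : w != v -> ~~ e v w -> w \notin Y.
  by move=> wv nvw; rewrite inY (negbTE wv) (negbTE nvw).
case dv : (deg e v <= 2).
  apply: noodd; apply: (@greedy _ e c sym irr c5 _ D2 f erefl).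
    by move=> s; rewrite inE.
  split.
    move=> x y Hx Hy; apply: fp.
    - apply/negP => /YD H; move: Hx; rewrite inE; case: (x =P v) => [->|/eqP xv]; by [rewrite dv | rewrite H].
    - apply/negP => /YD H; move: Hy; rewrite inE; case: (y =P v) => [->|/eqP yv]; by [rewrite dv | rewrite H].
  move=> w Hw nw.
  case: (w =P v) => [wv|/eqP wv].
    rewrite wv in Hw *; case/orP: hv => [/odd_deg_color //|/existsP [x /andP [evx dx]]].
    by move: (Hw x evx); rewrite inE dx.
  case evw : (e v w).
    by move: (Hw v); rewrite sym evw inE dv => /(_ erefl).
  have wY := notYnb w wv (negbT evw).
  have Hn : forall y, y \in Y -> ~~ e w y.
    move=> y yY; apply/negP => ewy; case: (y =P v) => [yv|/eqP yv].
      by rewrite yv sym evw in ewy.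
    by move: (Hw y ewy); rewrite inE (YD y yY yv).
  have [k Hk] := fo w wY Hn.
  exists k; suff -> : [set u | e w u & f u == k] = [set u | e w u & (u \notin Y) && (f u == k)] by [].
  apply/setP => u; rewrite !in_set; case ewu: (e w u) => //=.
  have uv : u != v by apply/eqP => uv; rewrite uv sym evw in ewu.
  have : u \notin Y by apply/negP => /YD /(_ uv) H; move: (Hw u ewu); rewrite inE H.
  by move=> ->.

have dv3 : 2 < deg e v by rewrite ltnNge dv.
set N3 := [set u | e v u & 2 < deg e u].
set NE := [set u | (e v u && (2 < deg e u)) && ~~ easy e u].
pose o u := odflt u [pick y | e u y && (y != v)].
pose h w := odflt (f w) [pick x | bad e f v w x].
set F := (f @: N3 :|: h @: NE) :|: (fun u => f (o u)) @: Nd e 2 v.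
have eq1 : deg e v = nd e 1 v + (nd e 2 v + #|N3|).
  rewrite /deg (card_split (e v) (fun u => deg e u == 1)); congr (_ + _).
  rewrite (card_split _ (fun u => deg e u == 2)); congr (_ + _); apply: eq_card => u; rewrite !inE;
  case evu: (e v u) => //=; have := npos u evu; case: (deg e u) => [|[|[|d]]] //.
have eq2 : #|N3| = ne e v + #|NE|.
  rewrite /N3 (card_split _ (easy e)); congr (_ + _); apply: eq_card => u; rewrite !inE //.
  case evu: (e v u) => //=; rewrite /easy; case: (2 < deg e u) => //.
have cF : #|F| < c.
  rewrite /F !cardsU.
  have := leq_imset_card f N3; have := leq_imset_card h NE;
  have := leq_imset_card (fun u => f (o u)) (Nd e 2 v). rewrite /nd in eq1 Hlt *. rewrite /ne in eq2 Hlt. lia.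
case: (card_lt_pick cF) => a; rewrite /F !inE !negb_or => /andP [/andP [a3 aE] a2].
apply: noodd; apply: (@greedy _ e c sym irr c5 _ D2 (upd f v a) erefl).
  by move=> s; rewrite inE.
split.
  move=> x y Hx Hy exy; rewrite /upd.
  case: (x =P v) => [xv|/eqP xv]; case: (y =P v) => [yv|/eqP yv].
  - by rewrite xv yv irr in exy.
  - apply/eqP => E; move/negP: a3; apply; apply/imsetP; exists y => //.
    move: Hy; rewrite !inE -xv exy -ltnNge => -> //.
  - apply/eqP => E; move/negP: a3; apply; apply/imsetP; exists x => //.
    move: Hx; rewrite !inE -yv sym exy -ltnNge => -> //.
  - apply: fp => //.
    + apply/negP => /YD /(_ xv) H; by move: Hx; rewrite inE H.
    + apply/negP => /YD /(_ yv) H; by move: Hy; rewrite inE H.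
move=> w Hw nw.
case oddw : (odd (deg e w)); first exact: odd_deg_color.
case: (w =P v) => [wv|/eqP wv].
  rewrite wv in Hw oddw; case/orP: hv => [|/existsP [x /andP [evx dx]]]; first by rewrite oddw.
  by move: (Hw x evx); rewrite inE dx.
case evw : (e v w).
  have ewv : e w v by rewrite sym.
  have := npos w evw; case dw : (deg e w) => [|[|[|d]]] // _; first by rewrite dw in oddw.
  -
    exists a.
    suff -> : [set u | e w u & upd f v a u == a] = [set v] by rewrite cards1.
    apply/setP => u; rewrite !inE /upd; case: (u =P v) => [->|/eqP uv]; first by rewrite ewv eqxx.
    case ewu: (e w u) => //=.
    have : [pick y | e w y && (y != v)] = Some (o w).
      rewrite /o; case: pickP => [y //|Hn]; by move: (Hn u); rewrite ewu uv.
    case: pickP => // y /andP [ewy yv] [Ey].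
    have <- : y = u by apply: (deg2_uniq dw ewv ewy ewu yv uv).
    apply/negP => /eqP E; move/negP: a2; apply; apply/imsetP; exists w; first by rewrite !inE evw dw.
    by rewrite -Ey E.
  -

    have nE : ~~ easy e w.
      rewrite /easy oddw /=; apply/negP => /andP [_ /existsP [x /andP [ewx dx]]].
      by move: (Hw x ewx); rewrite inE dx.
    apply: not_bad; apply/negP => Hb.
    have hw : h w = a.
      rewrite /h; case: (pickP (bad e f v w)) => [y Hy|Hn]; last by rewrite Hn in Hb.
      by rewrite (bad_uniq ewv Hb Hy).
    move/negP: aE; apply; apply/imsetP; exists w; last by rewrite hw.
    by rewrite !inE evw dw nE.
have wY := notYnb w wv (negbT evw).
have Hn : forall y, y \in Y -> ~~ e w y.
  move=> y yY; apply/negP => ewy; case: (y =P v) => [yv|/eqP yv].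
    by rewrite yv sym evw in ewy.
  by move: (Hw y ewy); rewrite inE (YD y yY yv).
have [k Hk] := fo w wY Hn.
exists k; suff -> : [set u | e w u & upd f v a u == k] = [set u | e w u & (u \notin Y) && (f u == k)] by [].
apply/setP => u; rewrite !inE /upd; case ewu: (e w u) => //=.
have uv : u != v by apply/eqP => uv; rewrite uv sym evw in ewu.
rewrite (negbTE uv).
have : u \notin Y by apply/negP => /YD /(_ uv) H; move: (Hw u ewu); rewrite inE H.
by move=> ->.
Qed.
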